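(* Let $n\ge 1$, $m$, $\hbar\neq 0$ be constants and let $\omega^0,\omega^1\in(-\pi/2,\pi/2]$. Let $a_\ast$ be a nowhere vanishing, differentiable complex-valued function of $t\in\mathbb{R}$ such that $\theta:=\arg a_\ast(t)$ is a constant independent of $t$. Let $b_0\in\mathbb{C}\setminus\{0\}$ and define $w_\ast(t):=b_0\big(a_\ast(0)/a_\ast(t)\big)^{n/2}$. Put $C_0:=2me^{i\omega^0}/\hbar$ and assume $C_0\in\mathbb{R}$. Let $V_0,V_0'$ be functions on $\mathbb{C}$ with $\mathrm{Im}\{\bar z\,V_0'(z)\}=0$ for all $z\in\mathbb{C}$. Let $u_\ast=u_\ast(t,x)$, $(t,x)\in\mathbb{R}\times\mathbb{R}^n$, be a complex-valued solution (for a fixed choice of sign $\pm$) of $$\pm i\,C_0\,\partial_t u_\ast+\frac{e^{2i\omega^0}}{e^{2i(\theta+\omega^1)}}\left(\frac{1}{|a_\ast|^2}\Delta_x u_\ast-\frac{1}{w_\ast}V_0'(u_\ast w_\ast)\right)=0,$$ where $\Delta_x=\sum_{j=1}^n\partial^2/(\partial x^j)^2$, which is sufficiently smooth and decays at spatial infinity so that all integrals below are finite and integrals over $\mathbb{R}^n$ of spatial divergences vanish. (1) (Charge estimate.) For every $t$, $$\pm\int_{\mathbb{R}^n}e_C^0(t,x)\,dx+\int_0^t\int_{\mathbb{R}^n}e_C^{n+1}(s,x)\,dx\,ds=\pm\int_{\mathbb{R}^n}e_C^0(0,x)\,dx,$$ where $e_C^0:=C_0|u_\ast|^2$ and $$e_C^{n+1}:=2\,\mathrm{Im}\Big(\frac{e^{2i(\theta+\omega^1)}}{e^{2i\omega^0}}\Big)\left(\frac{1}{|a_\ast|^2}\sum_{j=1}^n|\partial_{x^j}u_\ast|^2+\frac{1}{|w_\ast|^2}\overline{u_\ast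 w_\ast}\,V_0'(u_\ast w_\ast)\right).$$ (2) (Energy estimate.) Assume in addition that $\partial_t V_0(\psi)=\mathrm{Re}\,\big(\partial_t\overline{\psi}\,V_0'(\psi)\big)$ for every function $\psi=\psi(t,x)$. Then for every $t$, $$\int_{\mathbb{R}^n}e_E^0(t,x)\,dx+\int_0^t\int_{\mathbb{R}^n}e_E^{n+1}(s,x)\,dx\,ds=\int_{\mathbb{R}^n}e_E^0(0,x)\,dx,$$ where $$e_E^0:=\sum_{j=1}^n|\partial_{x^j}u_\ast|^2+\frac{2|a_\ast|^2}{|w_\ast|^2}V_0(u_\ast w_\ast)$$ and $$e_E^{n+1}:=\pm2C_0\,\mathrm{Im}\Big(\frac{e^{2i(\theta+\omega^1)}}{e^{2i\omega^0}}\Big)|a_\ast|^2|\partial_t u_\ast|^2+\frac{n}{2|w_\ast|^2}\big(\partial_t|a_\ast|^2\big)\left(\overline{u_\ast w_\ast}\,V_0'(u_\ast w_\ast)-\frac{2(n+2)}{n}V_0(u_\ast w_\ast)\right).$$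
   Context: Here $a_\ast$ plays the role of a (complex) scale-function of space and $w_\ast$ is a weight function built from it; any fixed branch of the power $(\cdot)^{n/2}$ may be used in the definition of $w_\ast$ (only $|w_\ast|^2=|b_0|^2|a_\ast(0)|^n/|a_\ast(t)|^n$ enters the identities beyond the equation itself). The sign $\pm$ is the same throughout each statement. *)

(* Defs.v *)
From HB Require Import structures.
From mathcomp Require Import all_boot all_order all_algebra.
From mathcomp Require Import all_classical all_reals all_analysis.
From mathcomp.real_closed Require Import complex.
Import Order.TTheory GRing.Theory Num.Theory.
Import numFieldNormedType.Exports.

Set Implicit Arguments.
Unset Strict Implicit.
Unset Printing Implicit Defensive.

Local Open Scope classical_set_scope.
Local Open Scope ring_scope.

Section Defs.
Context {R : realType}.

Definition cexpi (a : R) : R[i] := Complex (cos a) (sin a).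
Definition RtoC (x : R) : R[i] := Complex x 0.
Definition cabs2 (z : R[i]) : R := complex.Re z ^+ 2 + complex.Im z ^+ 2.
Definition cabs (z : R[i]) : R := Num.sqrt (cabs2 z).

Definition cderivable (f : R -> R[i]) (r : R) : Prop :=
  derivable (fun s => complex.Re (f s)) r 1 /\ derivable (fun s => complex.Im (f s)) r 1.

Definition cderive (f : R -> R[i]) (r : R) : R[i] :=
  Complex (derive1 (fun s => complex.Re (f s)) r) (derive1 (fun s => complex.Im (f s)) r).

Definition ej {n : nat} (j : 'I_n) : 'rV[R]_n := delta_mx 0 j.

Definition dt {n : nat} (u : R -> 'rV[R]_n -> R[i]) : R -> 'rV[R]_n -> R[i] :=
  fun t x => cderive (fun s => u s x) t.

Definition dx {n : nat} (j : 'I_n) (u : R -> 'rV[R]_n -> R[i]) :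
    R -> 'rV[R]_n -> R[i] :=
  fun t x => cderive (fun y => u t (x + y *: ej j)) 0.

Definition lap {n : nat} (u : R -> 'rV[R]_n -> R[i]) : R -> 'rV[R]_n -> R[i] :=
  fun t x => \sum_(j < n) dx j (dx j u) t x.

Definition rcons1 {n : nat} (y : R) (z : 'rV[R]_n) : 'rV[R]_n.+1 :=
  row_mx (const_mx y : 'rV[R]_1) z.

Fixpoint intRn (n : nat) : ('rV[R]_n -> R) -> R :=
  match n return ('rV[R]_n -> R) -> R with
  | 0 => fun f => f 0
  | n'.+1 => fun f =>
      Rintegral (@lebesgue_measure R) setT (fun y => intRn (fun z => f (rcons1 y z)))
  end.

Fixpoint integrableRn (n : nat) : ('rV[R]_n -> R) -> Prop :=
  match n return ('rV[R]_n -> R) -> Prop with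
  | 0 => fun f => True
  | n'.+1 => fun f =>
      (forall y, integrableRn (fun z => f (rcons1 y z))) /\
      (@lebesgue_measure R).-integrable setT
         (EFin \o (fun y => intRn (fun z => f (rcons1 y z)))) /\
      (@lebesgue_measure R).-integrable setT
         (EFin \o (fun y => intRn (fun z => `|f (rcons1 y z)|)))
  end.

Definition cintRn {n : nat} (f : 'rV[R]_n -> R[i]) : R[i] :=
  Complex (intRn (fun x => complex.Re (f x))) (intRn (fun x => complex.Im (f x))).

Definition cintegrableRn {n : nat} (f : 'rV[R]_n -> R[i]) : Prop :=
  integrableRn (fun x => complex.Re (f x)) /\ integrableRn (fun x => complex.Im (f x)).

Definition int0 (g : R -> R) (t : R) : R :=
  if (0 <= t) then Rintegral (@lebesgue_measure R) `[0, t] g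
  else - Rintegral (@lebesgue_measure R) `[t, 0] g.

Definition cint0 (g : R -> R[i]) (t : R) : R[i] :=
  Complex (int0 (fun s => complex.Re (g s)) t) (int0 (fun s => complex.Im (g s)) t).


Definition iC : R[i] := Complex 0 1.

(* w_*(t) = b0 (a_*(0)/a_*(t))^{n/2}, for a fixed branch  pw  of z |-> z^{n/2} *)
Definition wstar (b0 : R[i]) (pw : R[i] -> R[i]) (a : R -> R[i]) (t : R) : R[i] :=
  b0 * pw (a 0 / a t).

Definition C0of (m hbar om0 : R) : R[i] := RtoC (2 * m) * cexpi om0 / RtoC hbar.

Definition phase_ratio (theta om0 om1 : R) : R[i] :=
  cexpi (2 * (theta + om1)) / cexpi (2 * om0).

(* Regularity / decay of a balance law  d_t e0 + div F + e1 = 0 :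
   all spatial integrals are finite, differentiation of the spatial integral
   of e0 in time under the integral sign, vanishing of the spatial integrals
   of the spatial divergences d_{x^j} F_j, and continuity in time of the
   spatial integral of e1 (so that the time integral makes sense). *)
Definition regular_decay {n : nat} (e0 e1 : R -> 'rV[R]_n -> R[i])
    (F : 'I_n -> R -> 'rV[R]_n -> R[i]) : Prop :=
  (forall t,
    cintegrableRn (e0 t) /\
    cintegrableRn (fun x => cderive (fun r => e0 r x) t) /\
    cintegrableRn (e1 t) /\
    cderivable (fun r => cintRn (e0 r)) t /\
    cderive (fun r => cintRn (e0 r)) t
      = cintRn (fun x => cderive (fun r => e0 r x) t) /\
    (forall j, cintegrableRn (dx j (F j) t) /\ cintRn (dx j (F j) t) = 0)) /\
  continuous (fun r => complex.Re (cintRn (e1 r))) /\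
  continuous (fun r => complex.Im (cintRn (e1 r))).

End Defs.

(* Main.v *)
Require Import Defs.
From HB Require Import structures.
From mathcomp Require Import all_boot all_order all_algebra.
From mathcomp Require Import all_classical all_reals all_analysis.
From mathcomp.real_closed Require Import complex.
From mathcomp Require Import ring lra.
Import Order.TTheory GRing.Theory Num.Theory.
Import numFieldNormedType.Exports.
Local Open Scope classical_set_scope.
Local Open Scope ring_scope.

Section S.
Context {R : realType}.
Notation mu := (@lebesgue_measure R).
Lemma dM {f g : R -> R} {t : R} : derivable f t 1 -> derivable g t 1 ->
  derivable (fun r => f r * g r) t 1 /\
  derive1 (fun r => f r * g r) t = derive1 f t * g t + f t * derive1 g t.
Proof.
move=> hf hg; have := is_deriveM (derivableP hf) (derivableP hg) => H.
split; first exact: (@ex_derive _ _ _ _ _ _ _ H : derivable (fun r => f r * g r) t 1).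
rewrite derive1E (@derive_val _ _ _ _ _ _ _ H : 'D_1 (fun r => f r * g r) t = _) -!derive1E /GRing.scale /=; ring.
Qed.
Lemma dD {f g : R -> R} {t : R} : derivable f t 1 -> derivable g t 1 ->
  derivable (fun r => f r + g r) t 1 /\
  derive1 (fun r => f r + g r) t = derive1 f t + derive1 g t.
Proof.
move=> hf hg; have := is_deriveD (derivableP hf) (derivableP hg) => H.
split; first exact: (@ex_derive _ _ _ _ _ _ _ H).
by rewrite derive1E (@derive_val _ _ _ _ _ _ _ H) -!derive1E.
Qed.
Lemma dB {f g : R -> R} {t : R} : derivable f t 1 -> derivable g t 1 ->
  derivable (fun r => f r - g r) t 1 /\
  derive1 (fun r => f r - g r) t = derive1 f t - derive1 g t.
Proof.
move=> hf hg; have := is_deriveB (derivableP hf) (derivableP hg) => H.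
split; first exact: (@ex_derive _ _ _ _ _ _ _ H).
by rewrite derive1E (@derive_val _ _ _ _ _ _ _ H) -!derive1E.
Qed.
Lemma dN {f : R -> R} {t : R} : derivable f t 1 ->
  derivable (fun r => - f r) t 1 /\ derive1 (fun r => - f r) t = - derive1 f t.
Proof.
move=> hf; have := is_deriveN (derivableP hf) => H.
split; first exact: (@ex_derive _ _ _ _ _ _ _ H).
by rewrite derive1E (@derive_val _ _ _ _ _ _ _ H) -!derive1E.
Qed.
Lemma dC (c : R) t : derivable (fun _ : R => c) t 1 /\ derive1 (fun _ : R => c) t = 0.
Proof.
split; first exact: derivable_cst.
by rewrite derive1E derive_cst.
Qed.
Lemma cmulE (a b c d : R) : (a +i* b)%C * (c +i* d)%C = ((a*c - b*d) +i* (a*d + b*c))%C.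
Proof. by []. Qed.
Lemma caddE (a b c d : R) : (a +i* b)%C + (c +i* d)%C = ((a+c) +i* (b+d))%C.
Proof. by []. Qed.

Lemma ReM (z y : R[i]) : complex.Re (z * y) = complex.Re z * complex.Re y - complex.Im z * complex.Im y.
Proof. by case: z; case: y. Qed.
Lemma ImM (z y : R[i]) : complex.Im (z * y) = complex.Re z * complex.Im y + complex.Im z * complex.Re y.
Proof. by case: z; case: y. Qed.

Lemma ReD (z y : R[i]) : complex.Re (z + y) = complex.Re z + complex.Re y.
Proof. by case: z; case: y. Qed.
Lemma ImD (z y : R[i]) : complex.Im (z + y) = complex.Im z + complex.Im y.
Proof. by case: z; case: y. Qed.
Lemma ReB (z y : R[i]) : complex.Re (z - y) = complex.Re z - complex.Re y.
Proof. by case: z; case: y. Qed.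
Lemma ImB (z y : R[i]) : complex.Im (z - y) = complex.Im z - complex.Im y.
Proof. by case: z; case: y. Qed.

Lemma cdM {F G : R -> R[i]} {t : R} : cderivable F t -> cderivable G t ->
  cderivable (fun r => F r * G r) t /\
  cderive (fun r => F r * G r) t = cderive F t * G t + F t * cderive G t.
Proof.
move=> [f1 f2] [g1 g2].
have E1 : (fun r => complex.Re (F r * G r)) =
  (fun r => complex.Re (F r) * complex.Re (G r) - complex.Im (F r) * complex.Im (G r)).
  by apply: funext => r; rewrite ReM.
have E2 : (fun r => complex.Im (F r * G r)) =
  (fun r => complex.Re (F r) * complex.Im (G r) + complex.Im (F r) * complex.Re (G r)).
  by apply: funext => r; rewrite ImM.
have [a1 a2] := dM f1 g1; have [b1 b2] := dM f2 g2.
have [c1 c2] := dM f1 g2; have [d1 d2] := dM f2 g1.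
have [e1 e2] := dB a1 b1; have [h1 h2] := dD c1 d1.
split; first by rewrite /cderivable E1 E2.
rewrite /cderive E1 E2 e2 h2 a2 b2 c2 d2.
case: (F t) => x1 x2; case: (G t) => y1 y2.
rewrite !cmulE caddE /=; congr (_ +i* _)%C; ring.
Qed.

Lemma cdconj {F : R -> R[i]} {t : R} : cderivable F t ->
  cderivable (fun r => conjc (F r)) t /\
  cderive (fun r => conjc (F r)) t = conjc (cderive F t).
Proof.
move=> [f1 f2].
have E1 : (fun r => complex.Re (conjc (F r))) = (fun r => complex.Re (F r)).
  by apply: funext => r; case: (F r).
have E2 : (fun r => complex.Im (conjc (F r))) = (fun r => - complex.Im (F r)).
  by apply: funext => r; case: (F r).
have [a1 a2] := dN f2.
split; first by rewrite /cderivable E1 E2.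
by rewrite /cderive E1 E2 a2.
Qed.

Lemma cdC (c : R[i]) t : cderivable (fun _ => c) t /\ cderive (fun _ => c) t = 0.
Proof.
have [a1 a2] := dC (complex.Re c) t; have [b1 b2] := dC (complex.Im c) t.
by split => //; rewrite /cderive a2 b2.
Qed.

Lemma cdD {F G : R -> R[i]} {t : R} : cderivable F t -> cderivable G t ->
  cderivable (fun r => F r + G r) t /\
  cderive (fun r => F r + G r) t = cderive F t + cderive G t.
Proof.
move=> [f1 f2] [g1 g2].
have E1 : (fun r => complex.Re (F r + G r)) = (fun r => complex.Re (F r) + complex.Re (G r)).
  by apply: funext => r; rewrite ReD.
have E2 : (fun r => complex.Im (F r + G r)) = (fun r => complex.Im (F r) + complex.Im (G r)).
  by apply: funext => r; rewrite ImD.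
have [a1 a2] := dD f1 g1; have [b1 b2] := dD f2 g2.
split; first by rewrite /cderivable E1 E2.
by rewrite /cderive E1 E2 a2 b2.
Qed.

Lemma cdB {F G : R -> R[i]} {t : R} : cderivable F t -> cderivable G t ->
  cderivable (fun r => F r - G r) t /\
  cderive (fun r => F r - G r) t = cderive F t - cderive G t.
Proof.
move=> [f1 f2] [g1 g2].
have E1 : (fun r => complex.Re (F r - G r)) = (fun r => complex.Re (F r) - complex.Re (G r)).
  by apply: funext => r; rewrite ReB.
have E2 : (fun r => complex.Im (F r - G r)) = (fun r => complex.Im (F r) - complex.Im (G r)).
  by apply: funext => r; rewrite ImB.
have [a1 a2] := dB f1 g1; have [b1 b2] := dB f2 g2.
split; first by rewrite /cderivable E1 E2.
by rewrite /cderive E1 E2 a2 b2.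
Qed.

Lemma cdX {F : R -> R[i]} {t : R} (k : nat) : cderivable F t ->
  cderivable (fun r => F r ^+ k) t /\
  cderive (fun r => F r ^+ k) t = k%:R * F t ^+ k.-1 * cderive F t.
Proof.
move=> hF; elim: k => [|k [IH1 IH2]].
  have -> : (fun r => F r ^+ 0) = (fun _ => 1) by apply: funext => r; rewrite expr0.
  by have [h1 h2] := cdC 1 t; split => //; rewrite h2 mulr0n !mul0r.
have -> : (fun r => F r ^+ k.+1) = (fun r => F r ^+ k * F r).
  by apply: funext => r; rewrite exprSr.
have [h1 h2] := cdM IH1 hF; split => //; rewrite h2 IH2.
case: k {IH1 IH2 h1 h2} => [|k]; first by rewrite !expr0 !mul0r add0r mulr1 mul1r.
rewrite /= !exprS; ring.
Qed.

Lemma cabs2_d {F : R -> R[i]} {t : R} : cderivable F t ->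
  derivable (fun r => cabs2 (F r)) t 1 /\
  derive1 (fun r => cabs2 (F r)) t = 2 * complex.Re (conjc (F t) * cderive F t).
Proof.
move=> [f1 f2].
have E : (fun r => cabs2 (F r)) = (fun r => complex.Re (F r) * complex.Re (F r) + complex.Im (F r) * complex.Im (F r)).
  by apply: funext => r; rewrite /cabs2 !expr2.
have [a1 a2] := dM f1 f1; have [b1 b2] := dM f2 f2; have [c1 c2] := dD a1 b1.
rewrite E; split => //; rewrite c2 a2 b2 /cderive; case: (F t) => x y /=; ring.
Qed.

Lemma dInv (h : R -> R) t : derivable h t 1 -> h t != 0 ->
  derivable (fun r => (h r)^-1) t 1 /\
  derive1 (fun r => (h r)^-1) t = - derive1 h t / (h t) ^+ 2.
Proof.
move=> hd hn; have H := is_deriveV hn (derivableP hd).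
split; first exact: (@ex_derive _ _ _ _ _ _ _ H).
rewrite derive1E (@derive_val _ _ _ _ _ _ _ H) -derive1E /GRing.scale /=.
rewrite mulrC mulrN mulNr; done.
Qed.

Lemma dsum (k : nat) (f : 'I_k -> R -> R) t : (forall j, derivable (f j) t 1) ->
  derivable (fun r => \sum_(j < k) f j r) t 1 /\
  derive1 (fun r => \sum_(j < k) f j r) t = \sum_(j < k) derive1 (f j) t.
Proof.
elim: k f => [|k IH] f hf.
  have -> : (fun r => \sum_(j < 0) f j r) = (fun _ => 0).
    by apply: funext => r; rewrite big_ord0.
  by have [h1 h2] := dC (0 : R) t; split => //; rewrite h2 big_ord0.
have -> : (fun r => \sum_(j < k.+1) f j r) =
   (fun r => \sum_(j < k) f (widen_ord (leqnSn k) j) r + f ord_max r).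
  by apply: funext => r; rewrite big_ord_recr.
have [h1 h2] := IH (fun j => f (widen_ord (leqnSn k) j)) (fun j => hf _).
have [g1 g2] := dD h1 (hf ord_max).
by split => //; rewrite g2 h2 big_ord_recr.
Qed.


Fixpoint goodRn (n : nat) : ('rV[R]_n -> R) -> Prop :=
  match n return ('rV[R]_n -> R) -> Prop with
  | 0 => fun f => True
  | n'.+1 => fun f =>
      (forall y, goodRn _ (fun z => f (rcons1 y z))) /\
      mu.-integrable setT (EFin \o (fun y => intRn (fun z => f (rcons1 y z))))
  end.
Arguments goodRn {n}.

Lemma integrable_good (n : nat) (f : 'rV[R]_n -> R) : integrableRn f -> goodRn f.
Proof.
elim: n f => [//|n IH] f /= [h1 [h2 _]]; split => // y; exact: IH.
Qed.

Lemma good_lin (n : nat) (f g : 'rV[R]_n -> R) a b : goodRn f -> goodRn g ->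
  goodRn (fun x => a * f x + b * g x) /\
  intRn (fun x => a * f x + b * g x) = a * intRn f + b * intRn g.
Proof.
elim: n f g => [//|n IH] f g /= [hf1 hf2] [hg1 hg2].
have E : (fun y => intRn (fun z => a * f (rcons1 y z) + b * g (rcons1 y z)))
   = (fun y => a * intRn (fun z => f (rcons1 y z)) + b * intRn (fun z => g (rcons1 y z))).
  by apply: funext => y; case: (IH _ _ (hf1 y) (hg1 y)).
split; [split|].
- by move=> y; case: (IH _ _ (hf1 y) (hg1 y)).
- rewrite E.
  have := integrableD measurableT (integrableZl measurableT a hf2) (integrableZl measurableT b hg2).
  by apply: eq_integrable => // y _ /=.
- rewrite E RintegralD //.
  + by rewrite !RintegralZl.
  + by have := integrableZl measurableT a hf2; apply: eq_integrable => // y _ /=.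
  + by have := integrableZl measurableT b hg2; apply: eq_integrable => // y _ /=.
Qed.

Lemma good0 (n : nat) : goodRn (fun _ : 'rV[R]_n => 0) /\ intRn (fun _ : 'rV[R]_n => 0) = 0.
Proof.
elim: n => [//|n [IH1 IH2]] /=.
rewrite IH2; split; [split => //|].
- exact: integrable0.
- by rewrite Rintegral_cst // mul0r.
Qed.

Lemma good_sum (n : nat) k (F : 'I_k -> 'rV[R]_n -> R) : (forall j, goodRn (F j)) ->
  goodRn (fun x => \sum_(j < k) F j x) /\
  intRn (fun x => \sum_(j < k) F j x) = \sum_(j < k) intRn (F j).
Proof.
elim: k F => [|k IH] F hF.
  rewrite big_ord0; under eq_fun do rewrite big_ord0; exact: good0.
have [h1 h2] := IH (fun j => F (widen_ord (leqnSn k) j)) (fun j => hF _).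
have E : (fun x => \sum_(j < k.+1) F j x) =
   (fun x => 1 * (\sum_(j < k) F (widen_ord (leqnSn k) j) x) + 1 * F ord_max x).
  by apply: funext => x; rewrite big_ord_recr /= !mul1r.
rewrite E; have [g1 g2] := good_lin _ _ _ 1 1 h1 (hF ord_max).
by rewrite g2 h2 big_ord_recr /= !mul1r.
Qed.

Lemma derivable_cont {F : R -> R} {x} : derivable F x 1 -> {for x, continuous F}.
Proof. by move=> h; apply/differentiable_continuous; rewrite -derivable1_diffP. Qed.

Lemma ftc_ab (Phi g : R -> R) a b : a < b -> continuous g ->
  (forall t, derivable Phi t 1) -> (forall t, derive1 Phi t = - g t) ->
  Rintegral (@lebesgue_measure R) `[a, b] g = Phi a - Phi b.
Proof.
move=> ab cg dP eP.
rewrite /Rintegral (@continuous_FTC2 R g (fun x => - Phi x) a b ab).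
- by rewrite /= opprK addrC.
- exact: continuous_subspaceT.
- split.
  + by move=> x _; apply: derivableN.
  + apply: cvg_at_right_filter; exact: (derivable_cont (derivableN (dP a))).
  + apply: cvg_at_left_filter; exact: (derivable_cont (derivableN (dP b))).
- move=> x _; rewrite (derive1N (dP x)) eP opprK //.
Qed.

Lemma const_lemma (Phi g : R -> R) : continuous g ->
  (forall t, derivable Phi t 1) -> (forall t, derive1 Phi t = - g t) ->
  forall t, Phi t + int0 g t = Phi 0.
Proof.
move=> cg dP eP t; rewrite /int0.
case: (ltgtP t 0) => [t0|t0|->].
- rewrite (ftc_ab _ _ _ _ t0 cg dP eP); ring.
- rewrite (ftc_ab _ _ _ _ t0 cg dP eP); ring.
- by rewrite set_itv1 Rintegral_set1 addr0.
Qed.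


Lemma comp_lemma (n : nat) (E0 E1 : R -> 'rV[R]_n -> R)
  (DR DI : 'I_n -> R -> 'rV[R]_n -> R) (s : R) (al be : R -> R) :
  (forall t, integrableRn (fun x => derive1 (fun r => E0 r x) t)) ->
  (forall t, integrableRn (E1 t)) ->
  (forall t, derivable (fun r => intRn (E0 r)) t 1) ->
  (forall t, derive1 (fun r => intRn (E0 r)) t = intRn (fun x => derive1 (fun r => E0 r x) t)) ->
  (forall t j, integrableRn (DR j t) /\ integrableRn (DI j t) /\ intRn (DR j t) = 0 /\ intRn (DI j t) = 0) ->
  continuous (fun r => intRn (E1 r)) ->
  (forall t x, s * derive1 (fun r => E0 r x) t + E1 t x
     = \sum_(j < n) (al t * DR j t x + be t * DI j t x)) ->
  forall t, s * intRn (E0 t) + int0 (fun r => intRn (E1 r)) t = s * intRn (E0 0).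
Proof.
move=> i0 i1 d0 e0 hD c1 hid t.
apply: (const_lemma (fun r => s * intRn (E0 r))) => //.
- by move=> r; apply: derivableM => //; exact: derivable_cst.
- move=> r; rewrite derive1Ml // e0.
  have [_ L] := good_lin _ _ _ s 1 (integrable_good _ _ (i0 r)) (integrable_good _ _ (i1 r)).
  have : intRn (fun x => s * derive1 (fun r0 => E0 r0 x) r + 1 * E1 r x) = 0.
    have -> : (fun x => s * derive1 (fun r0 => E0 r0 x) r + 1 * E1 r x) =
      (fun x => \sum_(j < n) (al r * DR j r x + be r * DI j r x)).
      by apply: funext => x; rewrite mul1r hid.
    have gj : forall j, goodRn (fun x => al r * DR j r x + be r * DI j r x).
      move=> j; have [h1 [h2 _]] := hD r j.
      by case: (good_lin _ _ _ (al r) (be r) (integrable_good _ _ h1) (integrable_good _ _ h2)).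
    have [_ ->] := good_sum _ _ _ gj.
    apply: big1 => j _.
    have [h1 [h2 [h3 h4]]] := hD r j.
    have [_ ->] := good_lin _ _ _ (al r) (be r) (integrable_good _ _ h1) (integrable_good _ _ h2).
    by rewrite h3 h4 !mulr0 addr0.
  rewrite L mul1r => /eqP; rewrite addr_eq0 => /eqP ->; done.
Qed.

Lemma balance (n : nat) (e0 e1 : R -> 'rV[R]_n -> R[i])
  (F : 'I_n -> R -> 'rV[R]_n -> R[i]) (s : R) (al be al' be' : R -> R) :
  regular_decay e0 e1 F ->
  (forall t x, s * complex.Re (cderive (fun r => e0 r x) t) + complex.Re (e1 t x)
     = \sum_(j < n) (al t * complex.Re (dx j (F j) t x) + be t * complex.Im (dx j (F j) t x))) ->
  (forall t x, s * complex.Im (cderive (fun r => e0 r x) t) + complex.Im (e1 t x)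
     = \sum_(j < n) (al' t * complex.Re (dx j (F j) t x) + be' t * complex.Im (dx j (F j) t x))) ->
  forall t, RtoC s * cintRn (e0 t) + cint0 (fun r => cintRn (e1 r)) t
     = RtoC s * cintRn (e0 0).
Proof.
move=> [hreg [cRe cIm]] eRe eIm t.
have hD : forall t j, (integrableRn (fun x => complex.Re (dx j (F j) t x)) /\
     integrableRn (fun x => complex.Im (dx j (F j) t x))) /\
     intRn (fun x => complex.Re (dx j (F j) t x)) = 0 /\
     intRn (fun x => complex.Im (dx j (F j) t x)) = 0.
  move=> r j; have [_ [_ [_ [_ [_ h]]]]] := hreg r; have [h1 h2] := h j.
  by move: h2; rewrite /cintRn => -[-> ->].
have R1 := @comp_lemma n (fun r x => complex.Re (e0 r x)) (fun r x => complex.Re (e1 r x))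
  (fun j r x => complex.Re (dx j (F j) r x)) (fun j r x => complex.Im (dx j (F j) r x)) s al be.
have I1 := @comp_lemma n (fun r x => complex.Im (e0 r x)) (fun r x => complex.Im (e1 r x))
  (fun j r x => complex.Re (dx j (F j) r x)) (fun j r x => complex.Im (dx j (F j) r x)) s al' be'.
rewrite /RtoC /cintRn /cint0 /= !cmulE !caddE !mul0r !subr0.
congr (_ +i* _)%C.
- apply: R1 => //.
  + by move=> r; case: (hreg r) => _ [[h _] _].
  + by move=> r; case: (hreg r) => _ [_ [[h _] _]].
  + by move=> r; case: (hreg r) => _ [_ [_ [[h _] _]]].
  + by move=> r; case: (hreg r) => _ [_ [_ [_ [h _]]]]; move: (congr1 (@complex.Re R) h).
  + by move=> r j; case: (hD r j) => [[? ?] [? ?]].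
- rewrite ?add0r ?addr0; apply: I1 => //.
  + by move=> r; case: (hreg r) => _ [[_ h] _].
  + by move=> r; case: (hreg r) => _ [_ [[_ h] _]].
  + by move=> r; case: (hreg r) => _ [_ [_ [[_ h] _]]].
  + by move=> r; case: (hreg r) => _ [_ [_ [_ [h _]]]]; move: (congr1 (@complex.Im R) h).
  + by move=> r j; case: (hD r j) => [[? ?] [? ?]].
Qed.

End S.

Section W.
Context {R : realType}.

Lemma cexpi_conj (x : R) : cexpi x * conjc (cexpi x) = 1.
Proof.
rewrite /cexpi /= cmulE; congr (_ +i* _)%C.
- by rewrite mulrN opprK -!expr2 cos2Dsin2.
- by rewrite mulrN mulrC addNr.
Qed.

Lemma cexpi_neq0 (x : R) : cexpi x != 0.
Proof.
apply/negP => /eqP h; have := cexpi_conj x; rewrite h mul0r => /eqP.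
by rewrite eq_sym oner_eq0.
Qed.

Lemma cexpi_inv (x : R) : (cexpi x)^-1 = conjc (cexpi x).
Proof.
apply: (mulfI (cexpi_neq0 x)); rewrite cexpi_conj mulfV //; exact: cexpi_neq0.
Qed.

Lemma conjcM (z y : R[i]) : conjc (z * y) = conjc z * conjc y.
Proof. by case: z; case: y => a b c d /=; rewrite !cmulE; congr (_ +i* _)%C; ring. Qed.

Lemma conjcK (z : R[i]) : conjc (conjc z) = z.
Proof. by case: z => a b /=; rewrite opprK. Qed.

Lemma RtoC_conj (x : R) : conjc (RtoC x) = RtoC x.
Proof. by rewrite /RtoC /= oppr0. Qed.

Lemma cabs2_conj (z : R[i]) : z * conjc z = RtoC (cabs2 z).
Proof. by case: z => a b; rewrite /= cmulE /cabs2 /RtoC /=; congr (_ +i* _)%C; ring. Qed.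

Lemma RtoCM (x y : R) : RtoC (x * y) = RtoC x * RtoC y.
Proof. by rewrite /RtoC cmulE; congr (_ +i* _)%C; ring. Qed.

Lemma RtoCD (x y : R) : RtoC (x + y) = RtoC x + RtoC y.
Proof. by rewrite /RtoC caddE addr0. Qed.

Lemma RtoCV (x : R) : RtoC (x^-1) = (RtoC x)^-1.
Proof.
have [->|xn0] := eqVneq x 0; first by rewrite invr0 (_ : RtoC 0 = 0) ?invr0.
have h : RtoC x != 0 by rewrite /RtoC eq_complex /= (negbTE xn0).
apply: (mulfI h); rewrite -RtoCM mulfV // mulfV //.
Qed.

Lemma real_eq (z : R[i]) : complex.Im z = 0 -> z = RtoC (complex.Re z).
Proof. by case: z => a b /= ->. Qed.


Lemma RtoCN (x : R) : RtoC (- x) = - RtoC x.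
Proof. by rewrite /RtoC /GRing.opp /= oppr0. Qed.

Lemma RtoC_nat (k : nat) : RtoC (k%:R : R) = k%:R.
Proof.
elim: k => [//|k IH]; rewrite -addn1 !natrD RtoCD IH //.
Qed.

Lemma RtoC1 : RtoC 1 = 1 :> R[i].
Proof. by []. Qed.

Lemma RtoC0 : RtoC 0 = 0 :> R[i].
Proof. by []. Qed.

Lemma RtoC_neq0 (x : R) : x != 0 -> RtoC x != 0.
Proof. by move=> h; rewrite /RtoC eq_complex /= (negbTE h). Qed.

Lemma nat_neq0C (k : nat) : (0 < k)%N -> (k%:R : R[i]) != 0.
Proof.
move=> k0; rewrite -RtoC_nat; apply: RtoC_neq0; by rewrite pnatr_eq0 -lt0n.
Qed.

Lemma conjc_neq0 (z : R[i]) : z != 0 -> conjc z != 0.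
Proof. by move=> h; apply/negP => /eqP e; move: h; rewrite -[z]conjcK e /= oppr0 eqxx. Qed.

Lemma cabs2_neq0 (z : R[i]) : z != 0 -> cabs2 z != 0.
Proof.
move=> h; apply/negP => /eqP e; have := cabs2_conj z; rewrite e RtoC0 => /eqP.
by rewrite mulf_eq0 (negbTE h) (negbTE (conjc_neq0 _ h)).
Qed.

Lemma cabs2_gt0 (z : R[i]) : z != 0 -> 0 < cabs2 z.
Proof.
move=> h; rewrite lt_def cabs2_neq0 //= /cabs2; apply: addr_ge0; exact: sqr_ge0.
Qed.

Lemma wstar_neq0 (n : nat) (a : R -> R[i]) (ha0 : forall t, a t != 0)
  (b0 : R[i]) (hb0 : b0 != 0) (pw : R[i] -> R[i]) (hpw : forall z, pw z ^+ 2 = z ^+ n)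
  (r : R) : wstar b0 pw a r != 0.
Proof.
rewrite /wstar mulf_neq0 //; apply/negP => /eqP e.
have := hpw (a 0 / a r); rewrite e expr0n /= => /eqP; rewrite eq_sym expf_eq0.
by rewrite mulf_eq0 invr_eq0 (negbTE (ha0 0)) (negbTE (ha0 r)) andbF.
Qed.

Lemma wrel (n : nat) (hn : (1 <= n)%N) (a : R -> R[i]) (ha0 : forall t, a t != 0)
  (had : forall t, cderivable a t)
  (theta : R) (harg : forall t, a t = RtoC (cabs (a t)) * cexpi theta)
  (b0 : R[i]) (hb0 : b0 != 0)
  (pw : R[i] -> R[i]) (hpw : forall z, pw z ^+ 2 = z ^+ n)
  (hw : forall t, cderivable (wstar b0 pw a) t) (t : R) :
  cderive (wstar b0 pw a) t
  = RtoC (- (n%:R / 4) * derive1 (fun r => cabs2 (a r)) t / cabs2 (a t)) * wstar b0 pw a t.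
Proof.
set w := wstar b0 pw a.
have hconst : forall r, w r ^+ 2 * a r ^+ n = b0 ^+ 2 * a 0 ^+ n.
  move=> r; rewrite /w /wstar exprMn hpw expr_div_n -mulrA divfK //.
  exact: expf_neq0.
have hw0 : forall r, w r != 0.
  move=> r; apply/negP => /eqP h; have := hconst r; rewrite h expr0n mul0r => /eqP.
  by rewrite eq_sym mulf_eq0 !expf_eq0 (negbTE hb0) (negbTE (ha0 0)) !andbF.
have D0 : cderive (fun r => w r ^+ 2 * a r ^+ n) t = 0.
  have -> : (fun r => w r ^+ 2 * a r ^+ n) = (fun _ => b0 ^+ 2 * a 0 ^+ n).
    by apply: funext.
  exact: (cdC _ t).2.
have [_ D1] := cdM (cdX 2 (hw t)).1 (cdX n (had t)).1.
rewrite D1 (cdX 2 (hw t)).2 (cdX n (had t)).2 in D0.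
set X := cderive w t in D0 *; set A := a t in D0 *; set A' := cderive a t in D0 *.
set W := w t in D0 *.
have An0 : A != 0 by exact: ha0.
have Wn0 : W != 0 by exact: hw0.
have hX : X = - (n%:R / 2) * W * A' / A.
  have nn : n = n.-1.+1 by rewrite prednK.
  apply/eqP; rewrite -subr_eq0; apply/eqP.
  have h2 : (2 : R[i]) != 0 by apply: (nat_neq0C 2).
  apply: (@mulfI _ (2 * W * A ^+ n.-1 * A)).
    by apply: mulf_neq0 => //; apply: mulf_neq0; [apply: mulf_neq0 | apply: expf_neq0].
  have An : A ^+ n = A ^+ n.-1 * A by rewrite -exprSr prednK.
  rewrite mulr0 -D0 An expr1.
  change (wstar b0 pw a t) with W.
  field => //.
set e := cexpi theta.
have hk : forall r, a r * conjc e = RtoC (cabs (a r)).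
  by move=> r; rewrite {1}harg -mulrA cexpi_conj mulr1.
have hIm : complex.Im (cderive (fun r => a r * conjc e) t) = 0.
  rewrite /cderive /=.
  have -> : (fun r => complex.Im (a r * conjc e)) = (fun _ => 0).
    by apply: funext => r; rewrite hk.
  exact: (dC 0 t).2.
rewrite (cdM (had t) (cdC _ t).1).2 (cdC _ t).2 mulr0 addr0 in hIm.
have hA : A' * conjc A = RtoC (derive1 (fun r => cabs2 (a r)) t / 2).
  have hc : conjc A = RtoC (cabs A) * conjc e.
    by rewrite /A {1}harg conjcM RtoC_conj.
  have h1 : A' * conjc A = RtoC (cabs A * complex.Re (A' * conjc e)).
    by rewrite hc mulrCA RtoCM [A' * _]real_eq //.
  rewrite h1; congr RtoC.
  have [_ ->] := cabs2_d (had t).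
  rewrite -/A -/A' [conjc A * _]mulrC h1 /=; by field.
have cAn0 : conjc A != 0.
  by apply/negP => /eqP h; move: An0; rewrite -[A]conjcK h /= oppr0 eqxx.
have hq : A' / A = RtoC (derive1 (fun r => cabs2 (a r)) t / 2) / RtoC (cabs2 A).
  by rewrite -hA -cabs2_conj; field; apply/andP; split.
rewrite hX -mulrA -mulrA [W * _]mulrC !mulrA -(mulrA _ A') hq.
rewrite !(RtoCM, RtoCN, RtoCV, RtoC_nat).
field.
by apply: RtoC_neq0; apply: cabs2_neq0.
Qed.
End W.

Section T.
Context {R : realType}.
Lemma dx_conjM (n : nat) (G H : R -> 'rV[R]_n -> R[i]) j t x :
  cderivable (fun y => G t (x + y *: ej j)) 0 ->
  cderivable (fun y => H t (x + y *: ej j)) 0 ->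
  dx j (fun t x => conjc (G t x) * H t x) t x
  = conjc (dx j G t x) * H t x + conjc (G t x) * dx j H t x.
Proof.
move=> hG hH; rewrite /dx.
have [_ ->] := cdM (cdconj hG).1 hH.
by rewrite (cdconj hG).2 scale0r addr0.
Qed.

Lemma Re_RtoC (y : R) : complex.Re (RtoC y) = y. Proof. by []. Qed.
Lemma Im_RtoC (y : R) : complex.Im (RtoC y) = 0. Proof. by []. Qed.

Lemma Re_sum (k : nat) (f : 'I_k -> R[i]) : complex.Re (\sum_(j < k) f j) = \sum_(j < k) complex.Re (f j).
Proof. elim/big_rec2: _ => // j y z _ <-; by rewrite ReD. Qed.
Lemma Im_sum (k : nat) (f : 'I_k -> R[i]) : complex.Im (\sum_(j < k) f j) = \sum_(j < k) complex.Im (f j).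
Proof. elim/big_rec2: _ => // j y z _ <-; by rewrite ImD. Qed.
Lemma RtoC_sum (k : nat) (f : 'I_k -> R) : RtoC (\sum_(j < k) f j) = \sum_(j < k) RtoC (f j).
Proof. elim/big_rec2: _ => // j y z _ <-; by rewrite RtoCD. Qed.

Lemma cinvE (a b : R) : (a +i* b)%C ^-1 = ((a / (a^+2 + b^+2)) +i* (- b / (a^+2 + b^+2)))%C.
Proof. by rewrite /GRing.inv /= mulNr. Qed.

Lemma core1 (s c a' SR : R) (U Ut L V w Q : R[i]) :
  w != 0 -> complex.Im (conjc (U * w) * V) = 0 ->
  RtoC s * iC * RtoC c * Ut + Q * (RtoC a' * L - w^-1 * V) = 0 ->
  s * (c * (2 * complex.Re (conjc U * Ut)))
  + complex.Re (RtoC (2 * complex.Im (conjc Q)) * (RtoC (a' * SR) + RtoC (cabs2 w)^-1 * (conjc (U * w) * V)))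
  = -2 * complex.Im (Q * RtoC a') * complex.Re (RtoC SR + conjc U * L)
    + -2 * complex.Re (Q * RtoC a') * complex.Im (RtoC SR + conjc U * L).
Proof.
move=> wn0 hK E.
have E2 := congr1 (fun z => complex.Im (conjc U * z)) E.
move: wn0 hK E2 {E}.
case: U => u1 u2; case: Ut => p1 p2; case: L => l1 l2; case: V => v1 v2;
case: w => w1 w2; case: Q => q1 q2.
rewrite /RtoC /iC /cabs2 /=.
rewrite ?cinvE /=.
move=> wn0 hK E2.
set W := (w1 ^+ 2 + w2 ^+ 2)^-1 in E2 *.
have hK' : q1 * W * ((u1 * w1 - u2 * w2) * v2 + - (u1 * w2 + u2 * w1) * v1) = 0 by rewrite hK mulr0.
move: E2 hK'; rewrite !mulr0 !addr0. move=> E2 hK'.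
lra.
Qed.
Lemma Im_aux (p q r : R) (z : R[i]) :
  complex.Im (RtoC p * (RtoC q + RtoC r * z)) = p * (r * complex.Im z).
Proof. case: z => z1 z2; rewrite /RtoC /=; ring. Qed.
Lemma rhs_aux (k : nat) (A B : 'I_k -> R[i]) (z : R[i]) :
  2 * complex.Re (\sum_(j < k) conjc (A j) * B j + z) + 0 * complex.Im (\sum_(j < k) conjc (A j) * B j + z)
  = \sum_(j < k) 2 * complex.Re (conjc (B j) * A j) + 2 * complex.Re z.
Proof.
rewrite mul0r addr0 ReD Re_sum mulrDr mulr_sumr; congr (_ + _).
apply: eq_bigr => j _; congr (_ * _).
by case: (A j); case: (B j) => ? ? ? ? /=; ring.
Qed.
Lemma core2 (n : nat) (s c g G' V0v : R) (U Ut L V w Q : R[i]) :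
  (0 < n)%N -> g != 0 -> w != 0 -> Q * conjc Q = 1 ->
  RtoC s * iC * RtoC c * Ut + Q * (RtoC g^-1 * L - w^-1 * V) = 0 ->
  ((0 * g + 2 * G') / cabs2 w
     + 2 * g * (- (2 * complex.Re (conjc w * (RtoC (- (n%:R / 4) * G' / g) * w))) / cabs2 w ^+ 2)) * V0v
  + 2 * g / cabs2 w * complex.Re (conjc (Ut * w + U * (RtoC (- (n%:R / 4) * G' / g) * w)) * V)
  + complex.Re (RtoC (s * 2) * RtoC c * RtoC (complex.Im (conjc Q) * g * cabs2 Ut)
     + RtoC (n%:R / (2 * cabs2 w) * G')
       * (conjc (U * w) * V - RtoC (2 * (n + 2)%:R / n%:R * V0v)))
  = 2 * complex.Re (conjc Ut * L).
Proof.
move=> n0 gn0 wn0 hQ E.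
have hL : L = RtoC g * (w^-1 * V + conjc Q * - (RtoC s * iC * RtoC c * Ut)).
  move/eqP: E; rewrite addrC addr_eq0 => /eqP E1.
  have E2 := congr1 (fun z => conjc Q * z) E1; rewrite /= mulrA [conjc Q * Q]mulrC hQ mul1r in E2.
  have E3 : RtoC g^-1 * L = w^-1 * V + conjc Q * - (RtoC s * iC * RtoC c * Ut) by rewrite -E2 addrC subrK.
  by rewrite -E3 mulrA -RtoCM mulfV // mul1r.
rewrite hL natrD; clear hL E hQ.
have Nn0 : (n%:R : R) != 0 by rewrite pnatr_eq0 -lt0n.
move: wn0; set N := (n%:R : R).
case: U => u1 u2; case: Ut => p1 p2; case: V => v1 v2; case: w => w1 w2; case: Q => q1 q2.
move=> wn0.
have W0 : w1 ^+ 2 + w2 ^+ 2 != 0 by move: (cabs2_neq0 _ wn0); rewrite /cabs2.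
rewrite /RtoC /iC /cabs2 /= ?cinvE /=.
field; by rewrite W0 Nn0 gn0.
Qed.
Lemma Im_aux2 (p q r al be : R) (z : R[i]) :
  complex.Im (RtoC p * RtoC q * RtoC r + RtoC al * (z - RtoC be)) = al * complex.Im z.
Proof. case: z => z1 z2; rewrite /RtoC /=; ring. Qed.
Lemma Im_aux3 (p q r : R) :
  complex.Im (RtoC p + RtoC q * RtoC r) = 0.
Proof. rewrite /RtoC /=; ring. Qed.
End T.

Theorem lemma6p2 (R : realType) (n : nat) (hn : (1 <= n)%N)
  (m hbar : R) (hhbar : hbar != 0)
  (om0 om1 : R)
  (hom0 : - (pi / 2) < om0 <= pi / 2) (hom1 : - (pi / 2) < om1 <= pi / 2)
  (a : R -> R[i]) (ha0 : forall t, a t != 0) (had : forall t, cderivable a t)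
  (theta : R) (harg : forall t, a t = RtoC (cabs (a t)) * cexpi theta)
  (b0 : R[i]) (hb0 : b0 != 0)
  (pw : R[i] -> R[i]) (hpw : forall z, pw z ^+ 2 = z ^+ n)
  (hC0 : complex.Im (C0of m hbar om0) = 0)
  (V0 : R[i] -> R) (V0' : R[i] -> R[i])
  (hV0' : forall z, complex.Im (conjc z * V0' z) = 0)
  (s : R) (hs : s = 1 \/ s = -1)
  (u : R -> 'rV[R]_n -> R[i])
  (hu_t : forall t x, cderivable (fun r => u r x) t)
  (hu_x : forall t x j, cderivable (fun y => u t (x + y *: ej j)) 0)
  (hu_xx : forall t x j, cderivable (fun y => dx j u t (x + y *: ej j)) 0)
  (heq : forall t x,
     RtoC s * iC * C0of m hbar om0 * dt u t x
     + (cexpi (2 * om0) / cexpi (2 * (theta + om1)))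
       * (RtoC (cabs2 (a t))^-1 * lap u t x
          - (wstar b0 pw a t)^-1 * V0' (u t x * wstar b0 pw a t)) = 0) :
  (* (1) charge estimate *)
  (let eC0 := fun t x => C0of m hbar om0 * RtoC (cabs2 (u t x)) in
   let eC1 := fun t x =>
     RtoC (2 * complex.Im (phase_ratio theta om0 om1))
     * (RtoC ((cabs2 (a t))^-1 * \sum_(j < n) cabs2 (dx j u t x))
        + RtoC (cabs2 (wstar b0 pw a t))^-1
          * (conjc (u t x * wstar b0 pw a t) * V0' (u t x * wstar b0 pw a t))) in
   regular_decay eC0 eC1 (fun j t x => conjc (u t x) * dx j u t x) ->
   forall t,
     RtoC s * cintRn (eC0 t) + cint0 (fun r => cintRn (eC1 r)) t
     = RtoC s * cintRn (eC0 0))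
  /\
  (* (2) energy estimate *)
  (let eE0 := fun t x =>
     RtoC (\sum_(j < n) cabs2 (dx j u t x))
     + RtoC (2 * cabs2 (a t) / cabs2 (wstar b0 pw a t))
       * RtoC (V0 (u t x * wstar b0 pw a t)) in
   let eE1 := fun t x =>
     RtoC (s * 2) * C0of m hbar om0
       * RtoC (complex.Im (phase_ratio theta om0 om1) * cabs2 (a t) * cabs2 (dt u t x))
     + RtoC (n%:R / (2 * cabs2 (wstar b0 pw a t))
             * derive1 (fun r => cabs2 (a r)) t)
       * (conjc (u t x * wstar b0 pw a t) * V0' (u t x * wstar b0 pw a t)
          - RtoC (2 * (n + 2)%:R / n%:R * V0 (u t x * wstar b0 pw a t))) in
   (forall (psi : R -> R[i]) (t : R), cderivable psi t ->
      derivable (fun r => V0 (psi r)) t 1 /\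
      derive1 (fun r => V0 (psi r)) t
        = complex.Re (conjc (cderive psi t) * V0' (psi t))) ->
   (forall t, cderivable (wstar b0 pw a) t) ->
   (forall t x j, cderivable (fun r => dx j u r x) t) ->
   (forall t x j, cderivable (fun y => dt u t (x + y *: ej j)) 0) ->
   (forall t x j, dt (dx j u) t x = dx j (dt u) t x) ->
   regular_decay eE0 eE1 (fun j t x => conjc (dt u t x) * dx j u t x) ->
   forall t,
     cintRn (eE0 t) + cint0 (fun r => cintRn (eE1 r)) t = cintRn (eE0 0)).
Proof.
have Hw0 := wstar_neq0 n a ha0 b0 hb0 pw hpw.
set Q := cexpi (2 * om0) / cexpi (2 * (theta + om1)) in heq *.
have hP : phase_ratio theta om0 om1 = conjc Q.
  by rewrite /phase_ratio /Q !cexpi_inv conjcM conjcK mulrC.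
set c := complex.Re (C0of m hbar om0).
have hC : C0of m hbar om0 = RtoC c by rewrite /c -real_eq.
rewrite hP hC in heq *.
have hQ : Q * conjc Q = 1.
  rewrite /Q !cexpi_inv conjcM conjcK mulrACA (mulrC (conjc _)) !cexpi_conj mulr1 //.
split.
- move=> eC0 eC1 hreg t.
  apply: (@balance R n _ _ _ s (fun t => -2 * complex.Im (Q * RtoC ((cabs2 (a t))^-1)))
     (fun t => -2 * complex.Re (Q * RtoC ((cabs2 (a t))^-1)))
     (fun _ => 0) (fun _ => 0) hreg) => {}t x.
  + have hD : forall j, dx j (fun t x => conjc (u t x) * dx j u t x) t x =
       conjc (dx j u t x) * dx j u t x + conjc (u t x) * dx j (dx j u) t x.
      by move=> j; apply: dx_conjM.
    under eq_bigr => j _ do rewrite hD.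
    rewrite big_split -!mulr_sumr -Re_sum -Im_sum big_split -mulr_sumr.
    have -> : \sum_(j < n) conjc (dx j u t x) * dx j u t x = RtoC (\sum_(j < n) cabs2 (dx j u t x)).
      rewrite RtoC_sum; apply: eq_bigr => j _; by rewrite mulrC cabs2_conj.
    rewrite -/(lap u t x).
    have -> : complex.Re (cderive (eC0^~ x) t) = c * (2 * complex.Re (conjc (u t x) * dt u t x)).
      rewrite /cderive /= /eC0.
      have -> : (fun r => complex.Re (RtoC c * RtoC (cabs2 (u r x)))) = (fun r => c * cabs2 (u r x)).
        by apply: funext => r; rewrite -RtoCM.
      by rewrite derive1Ml ?(cabs2_d (hu_t t x)).2 //; case: (cabs2_d (hu_t t x)).
    exact: core1 (Hw0 t) (hV0' _) (heq t x).
  + rewrite [RHS](_ : _ = 0); last by apply: big1 => j _; rewrite !mul0r addr0.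
    have -> : complex.Im (cderive (eC0^~ x) t) = 0.
      rewrite /cderive /= /eC0.
      have -> : (fun r => complex.Im (RtoC c * RtoC (cabs2 (u r x)))) = (fun _ => 0).
        by apply: funext => r; rewrite -RtoCM.
      exact: (dC 0 t).2.
    by rewrite /eC1 Im_aux hV0' !mulr0 addr0.
- move=> eE0 eE1 hV0d hw hux_t hut_x hcomm hreg t.
  have H := @balance R n eE0 eE1 _ 1 (fun _ => 2) (fun _ => 0) (fun _ => 0) (fun _ => 0) hreg.
  rewrite -[X in X + _ = _]mul1r -[X in _ = X]mul1r -RtoC1.
  apply: H => {}t x; rewrite mul1r.
  + have hD : forall j, dx j (fun t x => conjc (dt u t x) * dx j u t x) t x =
       conjc (dt (dx j u) t x) * dx j u t x + conjc (dt u t x) * dx j (dx j u) t x.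
      by move=> j; rewrite hcomm; apply: dx_conjM.
    under eq_bigr => j _ do rewrite hD.
    rewrite big_split -!mulr_sumr -Re_sum -Im_sum big_split -mulr_sumr -/(lap u t x).
    set w := wstar b0 pw a.
    have E : (fun r => complex.Re (eE0 r x)) = (fun r => \sum_(j < n) cabs2 (dx j u r x)
       + (2 * cabs2 (a r)) * (cabs2 (w r))^-1 * V0 (u r x * w r)).
      by apply: funext => r; rewrite /eE0 ReD Re_RtoC -RtoCM Re_RtoC.
    have [s1 s2] := dsum _ (fun j r => cabs2 (dx j u r x)) t (fun j => (cabs2_d (hux_t t x j)).1).
    have [g1 g2] := cabs2_d (had t).
    have [g3 g4] := dM (dC 2 t).1 g1.
    have [h1 h2] := cabs2_d (hw t).
    have [h3 h4] := dInv _ _ h1 (cabs2_neq0 _ (Hw0 t)).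
    have [k1 k2] := dM g3 h3.
    have [p1 p2] := cdM (hu_t t x) (hw t).
    have [v1 v2] := hV0d _ _ p1.
    have [m1 m2] := dM k1 v1.
    have [q1 q2] := dD s1 m1.
    have -> : complex.Re (cderive (eE0^~ x) t) = derive1 (fun r => complex.Re (eE0 r x)) t by [].
    rewrite E q2 s2 m2 k2 g4 h4 (dC 2 t).2 v2 p2 h2.
    rewrite [RHS]rhs_aux.
    rewrite -addrA; congr (_ + _).
      by apply: eq_bigr => j _; rewrite (cabs2_d (hux_t t x j)).2.
    rewrite (wrel n hn a ha0 had theta harg b0 hb0 pw hpw hw t).
    exact: core2 hn (cabs2_neq0 _ (ha0 t)) (Hw0 t) hQ (heq t x).
  + rewrite [RHS](_ : _ = 0); last by apply: big1 => j _; rewrite !mul0r addr0.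
    have -> : complex.Im (cderive (eE0^~ x) t) = 0.
      rewrite /cderive /= /eE0.
      have -> : (fun r => complex.Im (eE0 r x)) = (fun _ => 0).
        by apply: funext => r; rewrite /eE0 Im_aux3.
      exact: (dC 0 t).2.
    by rewrite /eE1 Im_aux2 hV0' mulr0 addr0.
Qed.
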